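(* Let $C$ be an $[n,k,d]$ and $C'$ an $[n',k',d']$ linear code over $\mathbb{F}_q$, let $x \in C \times C'$, $e \in \mathbb{F}_q^{n\times n'}$, $y = x+e$, and suppose $2\sum_{j=1}^{n'} \min\{w(e_j), d\} < d\,d'$. With $\hat{x}$, $\alpha$, $I_E$ and the sets $E_0,\dots,E_J$ as in the context, there exists an index $k \in \{0,1,\dots,J-1\}$ (the same for all rows) such that $$2\,|I_E \setminus E_k| + |E_k| < d',$$ and hence, for every row index $i \in [n]$, $2\, w_{E_k}(\hat{x}^i - x^i) + |E_k| < d'$; that is, an error-and-erasure decoder for $C'$ with erasure set $E_k$ decodes every row $\hat{x}^i$ to $x^i$.
   Context: The product code $C \times C'$ consists of the $n \times n'$ matrices over $\mathbb{F}_q$ all of whose columns lie in $C$ and all of whose rows lie in $C'$. For a matrix $b$, $b_j$ denotes its $j$-th column and $b^i$ its $i$-th row; $w(\cdot)$ is Hamming weight; for $v \in \mathbb{F}_q^{n'}$ and $E \subseteq [n']$, $w_E(v)$ is the number of $j \notin E$ with $v_j \neq 0$. Let $t = \lfloor (d-1)/2 \rfloor$. Column decoding: each column $y_j$ ($j \in [n']$) is decoded by a bounded-distance decoder for $C$, which returns the unique codeword of $C$ within Hamming distance $t$ of $y_j$ if one exists and otherwise declares failure. On success with output $\hat{x}_j$ put $\alpha_j = (d - 2w(y_j - \hat{x}_j))/d$; on failure put $\hat{x}_j = y_j$ and $\alpha_j = 0$. Let $\hat{x}$ be the matrix with columns $\hat{x}_j$, and $I_E \subseteq [n']$ the set of $j$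 for which decoding failed or $\hat{x}_j \neq x_j$. Let $a_1 < a_2 < \dots < a_J$ be the distinct values among $\alpha_1,\dots,\alpha_{n'}$; set $E_0 = \emptyset$ and $E_k = \{ j \in [n'] : \alpha_j \le a_k\}$ for $k \in [J]$. An error-and-erasure decoder for $C'$ with erasure set $E$ returns the unique codeword $c$ with $2w_E(r-c) + |E| < d'$ if it exists. *)

(* Defs.v *)
From HB Require Import structures.
From mathcomp Require Import all_boot all_order all_algebra.
Set Implicit Arguments. Unset Strict Implicit. Unset Printing Implicit Defensive.
Import Order.TTheory GRing.Theory Num.Theory.
Local Open Scope ring_scope.

Section Defs.
Variable F : finFieldType.

Definition wt (m : nat) (v : 'rV[F]_m) : nat := #|[set i | v 0 i != 0]|.

Definition wtE (m : nat) (E : {set 'I_m}) (v : 'rV[F]_m) : nat :=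
  #|[set j | (j \notin E) && (v 0 j != 0)]|.

Definition min_dist (m : nat) (C : {vspace 'rV[F]_m}) (d : nat) : Prop :=
  (exists2 c, c \in C & (c != 0) && (wt c == d)) /\
  (forall c, c \in C -> c != 0 -> (d <= wt c)%N).

Definition colv (n n' : nat) (b : 'M[F]_(n, n')) (j : 'I_n') : 'rV[F]_n :=
  (col j b)^T.

(* bounded-distance decoder for C with radius t = (d-1)/2:
   Some c for the (unique) codeword within distance t, None = failure *)
Definition bdd_dec (n : nat) (C : {vspace 'rV[F]_n}) (d : nat) (v : 'rV[F]_n)
  : option 'rV[F]_n :=
  [pick c | (c \in C) && (wt (v - c) <= (d.-1)./2)%N].

Definition xhat_col (n n' : nat) (C : {vspace 'rV[F]_n}) (d : nat)
  (y : 'M[F]_(n, n')) (j : 'I_n') : 'rV[F]_n :=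
  if bdd_dec C d (colv y j) is Some c then c else colv y j.

Definition xhat (n n' : nat) (C : {vspace 'rV[F]_n}) (d : nat)
  (y : 'M[F]_(n, n')) : 'M[F]_(n, n') :=
  \matrix_(i < n, j < n') xhat_col C d y j 0 i.

Definition alpha (n n' : nat) (C : {vspace 'rV[F]_n}) (d : nat)
  (y : 'M[F]_(n, n')) (j : 'I_n') : rat :=
  if bdd_dec C d (colv y j) is Some c then
    ((d%:R - 2%:R * (wt (colv y j - c))%:R) / d%:R)
  else 0.

Definition IE (n n' : nat) (C : {vspace 'rV[F]_n}) (d : nat)
  (x y : 'M[F]_(n, n')) : {set 'I_n'} :=
  [set j | (bdd_dec C d (colv y j) == None) || (xhat_col C d y j != colv x j)].

Definition alpha_vals (n n' : nat) (C : {vspace 'rV[F]_n}) (d : nat)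
  (y : 'M[F]_(n, n')) : seq rat :=
  sort (fun a b : rat => a <= b) (undup [seq alpha C d y j | j <- enum 'I_n']).

Definition Jnum (n n' : nat) (C : {vspace 'rV[F]_n}) (d : nat)
  (y : 'M[F]_(n, n')) : nat := size (alpha_vals C d y).

(* E_0 = empty, E_k = {j | alpha_j <= a_k} for 1 <= k <= J *)
Definition Eset (n n' : nat) (C : {vspace 'rV[F]_n}) (d : nat)
  (y : 'M[F]_(n, n')) (k : nat) : {set 'I_n'} :=
  if k is k'.+1 then [set j | alpha C d y j <= nth 0 (alpha_vals C d y) k']
  else set0.

End Defs.

(* Main.v *)
Require Import Defs.
From HB Require Import structures.
From mathcomp Require Import all_boot all_order all_algebra.
From mathcomp Require Import ring lra zify.
Import Order.TTheory GRing.Theory Num.Theory.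
Local Open Scope ring_scope.

Set Implicit Arguments. Unset Strict Implicit. Unset Printing Implicit Defensive.
Lemma exists_min (N : nat) (a : 'I_N -> rat) (S : {set 'I_N}) j1 :
  j1 \in S -> exists2 j0, j0 \in S & forall j, j \in S -> a j0 <= a j.
Proof.
move=> Hj1; case: (Order.TotalTheory.arg_minP (P := mem S) a Hj1) => j0 Hj0 Hm.
by exists j0.
Qed.

Lemma core (N : nat) (a s : 'I_N -> rat) (K : rat) : 0 <= K ->
  forall (S : {set 'I_N}) (c M : rat), c <= M ->
  (forall j, j \in S -> c <= a j <= M) ->
  (forall j0, j0 \in S -> \sum_(j in S | a j0 <= a j) s j <= K) ->
  \sum_(j in S) s j * (a j - c) <= K * (M - c).
Proof.
move=> K0 S; move: {2}#|S| (leqnn #|S|) => n; elim: n S => [|n IH] S.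
  rewrite leqn0 cards_eq0 => /eqP -> c M cM _ _.
  by rewrite big_set0; apply: mulr_ge0 => //; rewrite subr_ge0.
move=> HS c M cM Hb Hg.
case: (set_0Vmem S) => [->|[j1 Hj1]].
  by rewrite big_set0; apply: mulr_ge0 => //; rewrite subr_ge0.
case: (exists_min a Hj1) => j0 Hj0 Hmin.
set m := a j0.
set S' := [set j in S | m < a j].
have HS' : (#|S'| <= n)%N.
  have : S' \proper S.
    apply/properP; split; first by apply/subsetP=> j; rewrite inE => /andP[].
    by exists j0 => //; rewrite inE ltxx andbF.
  move/proper_card => H; rewrite -ltnS; exact: leq_trans H HS.
have cm : c <= m by case/andP: (Hb _ Hj0).
have mM : m <= M by case/andP: (Hb _ Hj0).
have E1 : \sum_(j in S) s j * (a j - c) =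
   (m - c) * \sum_(j in S) s j + \sum_(j in S') s j * (a j - m).
  rewrite mulr_sumr.
  rewrite (bigID (fun j => m < a j)) /=.
  have -> : \sum_(j in S') s j * (a j - m) = \sum_(j in S | m < a j) s j * (a j - m).
    by apply: eq_bigl => j; rewrite inE.
  rewrite [X in _ = X + _](bigID (fun j => m < a j)) /= -addrA [X in _ = _ + X]addrC addrA.
  rewrite -big_split /=.
  congr (_ + _); first by apply: eq_bigr => j _; ring.
  apply: eq_bigr => j /andP[jS]; rewrite -leNgt => H.
  have -> : a j = m by apply/le_anti; rewrite H Hmin.
  by rewrite mulrC.
rewrite E1.
have H1 : (m - c) * \sum_(j in S) s j <= (m - c) * K.
  apply: ler_wpM2l; first by rewrite subr_ge0.
  have := Hg _ Hj0; congr (_ <= _); apply: eq_bigl => j.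
  by case: (boolP (j \in S)) => //= jS; rewrite Hmin.
have H2 : \sum_(j in S') s j * (a j - m) <= K * (M - m).
  apply: IH => //.
    move=> j; rewrite inE => /andP[jS mj]; rewrite (ltW mj) /=.
    by case/andP: (Hb _ jS).
  move=> j1' ; rewrite inE => /andP[j1S mj1].
  have := Hg _ j1S; congr (_ <= _); apply: eq_bigl => j; rewrite inE.
  case: (boolP (j \in S)) => //= jS; case: (boolP (a j1' <= a j)) => //= H.
  by rewrite (lt_le_trans mj1 H).
  by rewrite andbF.
have -> : K * (M - c) = (m - c) * K + K * (M - m) by ring.
exact: lerD.
Qed.

Section W.
Variable F : finFieldType.

Lemma wtE_set0 m (v : 'rV[F]_m) : wt v = wtE set0 v.
Proof. by rewrite /wt /wtE; apply: eq_card => j; rewrite !inE. Qed.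

Lemma wtE_tri m (E : {set 'I_m}) (u v w : 'rV[F]_m) :
  (wtE E (u - w) <= wtE E (u - v) + wtE E (v - w))%N.
Proof.
rewrite /wtE; apply: leq_trans (leq_card_setU _ _).
apply: subset_leq_card; apply/subsetP => j; rewrite !inE !mxE => /andP[-> H] /=.
apply: contraT; rewrite negb_or !negbK => /andP[/eqP H1 /eqP H2].
by move: H; rewrite -(subrKA (v 0 j)) -addrA H2 addr0 H1 eqxx.
Qed.

Lemma wtE_sym m (E : {set 'I_m}) (u v : 'rV[F]_m) : wtE E (u - v) = wtE E (v - u).
Proof.
rewrite /wtE; apply: eq_card => j; rewrite !inE !mxE.
by rewrite -opprB oppr_eq0.
Qed.

Lemma wt_le_wtE m (E : {set 'I_m}) (v : 'rV[F]_m) : (wt v <= wtE E v + #|E|)%N.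
Proof.
rewrite /wt /wtE; apply: leq_trans (leq_card_setU _ _).
apply: subset_leq_card; apply/subsetP => j; rewrite !inE => H.
by case: (j \in E); rewrite ?orbT ?H.
Qed.

Lemma wt_gt0 m (v : 'rV[F]_m) : v != 0 -> (0 < wt v)%N.
Proof.
move=> Hv; rewrite /wt card_gt0; apply/set0Pn.
case: (pickP (fun j => v 0 j != 0)) => [j Hj | H]; first by exists j; rewrite inE.
move: Hv; suff -> : v = 0 by rewrite eqxx.
by apply/rowP => j; rewrite mxE; move: (H j) => /negbFE/eqP.
Qed.

Lemma wt_le m (v : 'rV[F]_m) : (wt v <= m)%N.
Proof. by rewrite /wt; apply: leq_trans (max_card _) _; rewrite card_ord. Qed.

Lemma wt_sub_sym m (u v : 'rV[F]_m) : wt (u - v) = wt (v - u).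
Proof. by rewrite !wtE_set0 wtE_sym. Qed.

Lemma wt_tri m (u v w : 'rV[F]_m) : (wt (u - w) <= wt (u - v) + wt (v - w))%N.
Proof. by rewrite !wtE_set0 wtE_tri. Qed.

Lemma dist_ge m (C : {vspace 'rV[F]_m}) d u v : min_dist C d -> u \in C -> v \in C ->
  u != v -> (d <= wt (u - v))%N.
Proof.
move=> [_ H] uC vC uv; apply: H; first exact: memvB.
by rewrite subr_eq0.
Qed.

Lemma colvD n n' (a b : 'M[F]_(n, n')) j : colv (a + b) j = colv a j + colv b j.
Proof. by apply/rowP => i; rewrite !mxE. Qed.

End W.

Lemma half_fact d : (0 < d)%N -> (2 * (d.-1)./2 < d)%N /\ forall w, ((d.-1)./2 < w)%N -> (d <= 2 * w)%N.
Proof.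
move=> d0; have := odd_double_half d.-1; rewrite -muln2.
case: (odd d.-1) => /= H; split; try move=> w; lia.
Qed.

Lemma col_bound (F : finFieldType) n n' (C : {vspace 'rV[F]_n}) d (x e : 'M[F]_(n,n')) j :
  min_dist C d -> (0 < d)%N -> colv x j \in C ->
  [/\ 0 <= alpha C d (x + e) j, alpha C d (x + e) j <= 1 &
   d%:R - 2%:R * (minn (wt (colv e j)) d)%:R <=
     d%:R * ((1 - 2%:R * (j \in IE C d x (x + e))%:R) * alpha C d (x + e) j) :> rat].
Proof.
move=> HC d0 xC.
have [h1 h2] := half_fact d0.
have dR : (0 : rat) < d%:R by rewrite ltr0n.
have dne : (d%:R : rat) != 0 by rewrite lt0r_neq0.
set y := x + e.
have ye : colv y j - colv x j = colv e j by rewrite /y colvD addrC addKr.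
rewrite /alpha /IE /xhat_col inE.
case E: (bdd_dec C d (colv y j)) => [c|] /=.
  have [cC cw] : c \in C /\ (wt (colv y j - c) <= (d.-1)./2)%N.
    by move: E; rewrite /bdd_dec; case: pickP => // c' /andP[? ?] [<-].
  set w := wt (colv y j - c) in cw *.
  have w2 : (2 * w < d)%N by lia.
  have w2R : (2%:R * w%:R : rat) < d%:R by rewrite -natrM ltr_nat.
  have hA : d%:R * ((d%:R - 2%:R * w%:R) / d%:R) = d%:R - 2%:R * w%:R :> rat.
    by rewrite mulrC divfK.
  split.
  - by apply: divr_ge0; [lra | exact: ltW].
  - have w0 : (0 : rat) <= w%:R by rewrite ler0n.
    by rewrite ler_pdivrMr // mul1r; lra.
  rewrite mulrCA hA.
  case: (eqVneq c (colv x j)) => [ecx | ncx] /=.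
    rewrite mulr0 subr0 mul1r.
    have -> : minn (wt (colv e j)) d = w.
      have -> : wt (colv e j) = w by rewrite /w ecx ye.
      by apply/minn_idPl; lia.
    lra.
  rewrite mulr1.
  have Hd : (d <= w + minn (wt (colv e j)) d)%N.
    case: (leqP d (wt (colv e j))) => Hwe.
      by rewrite leq_addl.
    apply: leq_trans (dist_ge HC cC xC ncx) _.
    apply: leq_trans (wt_tri _ (colv y j) _) _.
    by rewrite wt_sub_sym ye.
  have : (d%:R : rat) <= w%:R + (minn (wt (colv e j)) d)%:R by rewrite -natrD ler_nat.
  lra.
have Hn : ((d.-1)./2 < wt (colv e j))%N.
  move: E; rewrite /bdd_dec; case: pickP => // H _.
  have := H (colv x j); rewrite xC /= ye => /negbT; rewrite -ltnNge; done.
have := h2 _ Hn => H2.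
have : (d%:R : rat) <= 2%:R * (minn (wt (colv e j)) d)%:R.
  rewrite -natrM ler_nat; case: (leqP d (wt (colv e j))) => Hwe.
    lia.
  by [].
split => //; rewrite ?mulr0; lra.
Qed.

Lemma lt_nth (s : seq rat) i j : sorted (fun a b : rat => a <= b) s -> uniq s ->
  (i < j)%N -> (j < size s)%N -> nth 0 s i < nth 0 s j.
Proof.
move=> Hs Hu ij js.
have is_ : (i < size s)%N by apply: ltn_trans ij js.
rewrite lt_neqAle (sorted_ltn_nth (@le_trans _ _) 0 Hs) // ?andbT.
by rewrite nth_uniq // neq_ltn ij.
Qed.

Lemma Eset_index (F : finFieldType) n n' (C : {vspace 'rV[F]_n}) d (y : 'M[F]_(n, n')) j0 :
  (index (alpha C d y j0) (alpha_vals C d y) < Jnum C d y)%N /\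
  Eset C d y (index (alpha C d y j0) (alpha_vals C d y)) =
    [set j | alpha C d y j < alpha C d y j0].
Proof.
set s := alpha_vals C d y.
have Hs : sorted (fun a b : rat => a <= b) s by apply: sort_sorted; exact: le_total.
have Hu : uniq s by rewrite /s /alpha_vals sort_uniq undup_uniq.
have Hin : forall j, alpha C d y j \in s.
  by move=> j; rewrite /s /alpha_vals mem_sort mem_undup; apply: map_f; rewrite mem_enum.
have Hlt : forall j, (index (alpha C d y j) s < size s)%N by move=> j; rewrite index_mem.
have Hnth : forall j, nth 0 s (index (alpha C d y j) s) = alpha C d y j.
  by move=> j; rewrite nth_index.
split; first exact: Hlt.
apply/setP => j; rewrite [in RHS]inE.
have jm := Hlt j; have jk := Hlt j0.
have Hm := Hnth j; have Hk := Hnth j0.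
move: (index (alpha C d y j) s) (index (alpha C d y j0) s) jm jk Hm Hk => m kk jm jk Hm Hk.
rewrite -Hm -Hk /Eset -/s.
case: kk jk Hk => [|k'] jk Hk.
  rewrite in_set0; apply/esym/negbTE; rewrite -leNgt.
  exact: (sorted_leq_nth (@le_trans _ _) (@lexx _ _) 0 Hs).
rewrite inE -Hm.
case: (leqP m k') => mk.
  rewrite (lt_nth Hs Hu _ jk) ?ltnS //.
  rewrite leq_eqVlt in mk; case/orP: mk => [/eqP -> | mk']; first by rewrite lexx.
  by rewrite ltW // (lt_nth Hs Hu mk') // (ltn_trans _ jk).
rewrite leNgt (lt_nth Hs Hu mk jm) /=.
apply/esym/negbTE; rewrite -leNgt.
exact: (sorted_leq_nth (@le_trans _ _) (@lexx _ _) 0 Hs).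
Qed.

Unset Implicit Arguments.
Set Strict Implicit.

Theorem mainTheorem3 (F : finFieldType) (n n' k k' d d' : nat)
  (C : {vspace 'rV[F]_n}) (C' : {vspace 'rV[F]_n'})
  (hCk : \dim C = k) (hCd : min_dist C d)
  (hC'k : \dim C' = k') (hC'd : min_dist C' d')
  (x e : 'M[F]_(n, n'))
  (hxcol : forall j : 'I_n', colv x j \in C)
  (hxrow : forall i : 'I_n, row i x \in C')
  (hw : (2 * (\sum_(j < n') minn (wt (colv e j)) d) < d * d')%N) :
  let y := x + e in
  exists2 kk : nat, (kk < Jnum C d y)%N &
    [/\ (2 * #|IE C d x y :\: Eset C d y kk| + #|Eset C d y kk| < d')%N,
        forall i : 'I_n,
          (2 * wtE (Eset C d y kk) (row i (xhat C d y) - row i x)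
             + #|Eset C d y kk| < d')%N
      & forall (i : 'I_n) (c : 'rV[F]_n'), c \in C' ->
          (2 * wtE (Eset C d y kk) (row i (xhat C d y) - c)
             + #|Eset C d y kk| < d')%N -> c = row i x].
Proof.
move=> y.
set S := (\sum_(j < n') minn (wt (colv e j)) d)%N in hw.
have d0 : (0 < d)%N by move: hw; case: (posnP d) => [->|//]; rewrite mul0n ltn0.
have d'n : (d' <= n')%N.
  by case: hC'd => [[c _ /andP[_ /eqP <-]] _]; exact: wt_le.
set α := alpha C d y.
set IEs := IE C d x y.
pose s := fun j => 1 - 2%:R * (j \in IEs)%:R : rat.
pose K : rat := n'%:R - d'%:R.
have K0 : 0 <= K by rewrite subr_ge0 ler_nat.
have cb : forall j, [/\ 0 <= α j, α j <= 1 &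
   d%:R - 2%:R * (minn (wt (colv e j)) d)%:R <= d%:R * (s j * α j)].
  by move=> j; exact: (col_bound e hCd d0 (hxcol j)).
have [j0 Hj0] : exists j0, K < \sum_(j | α j0 <= α j) s j.
  case: (boolP [exists j0, K < \sum_(j | α j0 <= α j) s j]) => [/existsP//| /existsPn Hall].
  exfalso.
  have Hc := @core n' α s K K0 setT 0 1 ler01.
  have {Hc} Hc : \sum_(j in setT) s j * (α j - 0) <= K * (1 - 0).
    apply: Hc.
      by move=> j _; case: (cb j) => -> -> _.
    move=> j1 _; move: (Hall j1); rewrite -leNgt => H.
    by apply: le_trans H; rewrite le_eqVlt; apply/orP; left; apply/eqP; apply: eq_bigl => j; rewrite inE.
  have Hlow : d%:R * n'%:R - 2%:R * S%:R <= d%:R * \sum_(j in setT) s j * (α j - 0) :> rat.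
    rewrite mulr_sumr.
    have -> : d%:R * n'%:R - 2%:R * S%:R =
       \sum_(j in setT) (d%:R - 2%:R * (minn (wt (colv e j)) d)%:R) :> rat.
      rewrite sumrB sumr_const cardsT card_ord -mulr_sumr /S natr_sum.
      congr (_ - _ * _); [by rewrite mulr_natr | by apply: eq_bigl => j; rewrite inE].
    by apply: ler_sum => j _; rewrite subr0; case: (cb j).
  have hwR : 2%:R * S%:R < d%:R * d'%:R :> rat by rewrite -!natrM ltr_nat.
  have dR : (0 : rat) < d%:R by rewrite ltr0n.
  have := ler_wpM2l (ltW dR) Hc.
  rewrite subr0 mulr1 /K.
  move: Hlow hwR; set Q := \sum_(j in setT) _.
  nra.
pose a := α j0.
pose T := [set j | α j < a].
have [Jk EkT] := Eset_index C d y j0.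
exists (index a (alpha_vals C d y)) => //.
rewrite -/α -/a in EkT; rewrite EkT.
have H1 : (2 * #|IEs :\: T| + #|T| < d')%N.
  have : \sum_(j | a <= α j) s j = #|~: T :\: IEs|%:R - #|~: T :&: IEs|%:R.
    have -> : \sum_(j | a <= α j) s j = \sum_(j in ~: T) s j.
      by apply: eq_bigl => j; rewrite !inE -leNgt.
    rewrite (big_setID IEs) /= addrC.
    rewrite (eq_bigr (fun _ => 1)); last first.
      by move=> j; rewrite in_setD /s => /andP[/negbTE -> _]; rewrite mulr0 subr0.
    rewrite [X in _ + X](eq_bigr (fun _ => -1)); last first.
      by move=> j; rewrite in_setI /s => /andP[_ ->]; rewrite mulr1; lra.
    by rewrite !sumr_const -mulNrn.
  have e1 : ~: T :&: IEs = IEs :\: T by rewrite setIC setDE.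
  rewrite e1 => Heq; move: Hj0; rewrite -/a Heq => Hj.
  have hc := cardsC T; rewrite card_ord in hc.
  have hd := cardsID IEs (~: T); rewrite setIC -setDE in hd.
  have : (#|IEs :\: T| + #|~: T :\: IEs| + #|T| = n')%N by rewrite hd addnC hc.
  move=> hn; rewrite -(ltr_nat rat) natrD natrM.
  have hnR : (n'%:R : rat) = #|IEs :\: T|%:R + #|~: T :\: IEs|%:R + #|T|%:R by rewrite -!natrD hn.
  move: Hj; rewrite /K hnR; lra.
have H2 : forall i, (wtE T (row i (xhat C d y) - row i x) <= #|IEs :\: T|)%N.
  move=> i; rewrite /wtE; apply: subset_leq_card; apply/subsetP => j.
  move=> Hj; rewrite in_setD; move: Hj; rewrite inE => /andP[Hn Hne]; rewrite Hn /=.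
  apply: contraNT Hne => Hj; rewrite !mxE.
  move: Hj; rewrite /IEs /IE inE negb_or => /andP[_ /negbNE /eqP ->].
  by rewrite !mxE subrr.
split => //.
  by move=> i; apply: leq_ltn_trans H1; rewrite leq_add2r leq_mul2l H2 orbT.
move=> i c cC Hc; rewrite -/T in Hc.
have Hx : (2 * wtE T (row i (xhat C d y) - row i x) + #|T| < d')%N.
  by apply: leq_ltn_trans H1; rewrite leq_add2r leq_mul2l H2 orbT.
apply/eqP; apply: contraT => ncx.
have := dist_ge hC'd cC (hxrow i) ncx.
have h1 := wt_le_wtE T (c - row i x).
rewrite (wtE_sym T c (row i x)) in h1.
have h2 := wtE_tri T (row i x) (row i (xhat C d y)) c.
rewrite (wtE_sym T (row i x) (row i (xhat C d y))) in h2.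
move: Hc Hx h1 h2. set p := wtE T (row i (xhat C d y) - c). set q := wtE T (row i (xhat C d y) - row i x). set r := #|T|. set u := wtE T (row i x - c). set v := wt (c - row i x). clearbody p q r u v. lia.
Qed.
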